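(* Consider the following transition system (an abstract model of a counting network with one balancer and two counters). A state consists of a bit $b \in \{0,1\}$, natural numbers $n_0, n_1$, finite sets $\tau^0, \tau^1$ of tokens (natural numbers), and two finite maps (''histories'') $H^0, H^1$ from natural numbers to pairs $(\hat\iota, z)$ where $\hat\iota$ is a finite set of tokens and $z$ is a token. Write $\mathsf{spent}(H)$ for the set of second components $z$ of entries of $H$, and $\tau = \tau^0 \cup \tau^1$. The initial state is $b = 0$, $n_0 = 0$, $n_1 = 1$, $\tau^0 = \tau^1 = \emptyset$, $H^0 = \{0 \mapsto (\{0\}, 0)\}$, $H^1 = \{1 \mapsto (\{1\}, 1)\}$. The transitions are: (Flip) choose a token $z \notin \tau^0 \cup \tau^1 \cup \mathsf{spent}(H^0) \cup \mathsf{spent}(H^1)$, add $z$ to $\tau^{b}$, and set $b := 1 - b$; (Increment) for $i \in \{0,1\}$ and a token $z \in \tau^i$: add the entry $(n_i + 2) \mapsto (\tau^0 \cup \tau^1, z)$ to $H^i$ (the set $\tau^0 \cup \tau^1$ taken before removing $z$), remove $z$ from $\tau^i$, and set $n_i := n_i + 2$. Then every state reachable from the initial state by finitely many transitions satisfies: (1) $|H^0| + |\tau^0| = |H^1| + |\tau^1| + b$; (2) $\mathrm{dom}\,H^0 = \{0, 2, 4, \dots, n_0\}$ and $\mathrm{dom}\,H^1 = \{1, 3, 5, \dots, n_1\}$; (3) the sets $\tau^0$, $\tau^1$, $\mathsf{spent}(H^0) \cup \mathsf{spent}(H^1)$ are pairwise disjoint; (4) for every entry $t \mapsto (\hat\iota,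 z)$ of $H^0$ or $H^1$, $z \in \hat\iota$; (5) for every entry $t \mapsto (\hat\iota, z)$ of $H^0$: $t + 2|\hat\iota \cap \tau^0| < n_1 + 2|\hat\iota \cap \tau^1| + 2$; and for every entry $t \mapsto (\hat\iota, z)$ of $H^1$: $t + 2|\hat\iota \cap \tau^1| < n_0 + 2|\hat\iota \cap \tau^0| + 2$.
   Context: $|S|$ denotes the cardinality of a finite set or the number of entries of a finite map $S$. Tokens are natural numbers. The model corresponds to a counter implementation in which a balancer bit $b$ directs each incrementing thread to counter $c_0$ (holding even values $n_0$) or $c_1$ (holding odd values $n_1$); a ''flip'' issues a token for the counter indicated by the old value of $b$, and an ''increment'' spends such a token to add 2 to that counter, recording the new value together with a snapshot of the currently outstanding tokens. *)

(* Defs.v *)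
From mathcomp Require Import all_boot.
Set Implicit Arguments. Unset Strict Implicit. Unset Printing Implicit Defensive.

(* Finite sets of tokens are represented by sequences; membership is \in,
   cardinality is the number of distinct elements. *)
Definition tset := seq nat.
Definition tcard (s : tset) : nat := size (undup s).
Definition tinter (s t : tset) : tset := [seq x <- s | x \in t].

(* A history is a finite map nat -> (tset * nat), represented as an
   association list whose keys are kept distinct by [hadd] (update). *)
Definition history := seq (nat * (tset * nat)).
Definition hdom (H : history) : seq nat := map fst H.
Definition hcard (H : history) : nat := size (undup (hdom H)).
Definition spent (H : history) : seq nat := map (fun e => e.2.2) H.
Definition hadd (k : nat) (v : tset * nat) (H : history) : history :=
  (k, v) :: [seq e <- H | e.1 != k].

Record state := State {
  st_b : bool;            (* false = 0, true = 1 *)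
  st_n0 : nat; st_n1 : nat;
  st_tau0 : tset; st_tau1 : tset;
  st_H0 : history; st_H1 : history }.

Definition init_state : state :=
  State false 0 1 [::] [::] [:: (0, ([:: 0], 0))] [:: (1, ([:: 1], 1))].

Inductive step : state -> state -> Prop :=
| step_flip b n0 n1 t0 t1 H0 H1 z :
    z \notin t0 -> z \notin t1 -> z \notin spent H0 -> z \notin spent H1 ->
    step (State b n0 n1 t0 t1 H0 H1)
         (if b then State (~~ b) n0 n1 t0 (z :: t1) H0 H1
               else State (~~ b) n0 n1 (z :: t0) t1 H0 H1)
| step_inc0 b n0 n1 t0 t1 H0 H1 z :
    z \in t0 ->
    step (State b n0 n1 t0 t1 H0 H1)
         (State b n0.+2 n1 [seq x <- t0 | x != z] t1
                (hadd n0.+2 (t0 ++ t1, z) H0) H1)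
| step_inc1 b n0 n1 t0 t1 H0 H1 z :
    z \in t1 ->
    step (State b n0 n1 t0 t1 H0 H1)
         (State b n0 n1.+2 t0 [seq x <- t1 | x != z]
                H0 (hadd n1.+2 (t0 ++ t1, z) H1)).

Inductive reachable : state -> Prop :=
| reach_init : reachable init_state
| reach_step s s' : reachable s -> step s s' -> reachable s'.

(* Main.v *)
Require Import Defs.
From mathcomp Require Import all_boot.
From mathcomp Require Import zify.

Lemma hadd_fresh k v (H : history) : k \notin hdom H -> hadd k v H = (k, v) :: H.
Proof.
move=> Hk; rewrite /hadd; congr cons; apply/all_filterP/allP => e he.
apply: (contraNneq _ Hk) => <-; exact: map_f.
Qed.

Lemma hcard_cons k v (H : history) : k \notin hdom H -> hcard ((k, v) :: H) = (hcard H).+1.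
Proof. by move=> Hk; rewrite /hcard /= (negbTE Hk). Qed.

Lemma tcard_sub (s1 s2 : tset) : {subset s1 <= s2} -> tcard s1 <= tcard s2.
Proof.
move=> Hs; apply: uniq_leq_size; first exact: undup_uniq.
by move=> x; rewrite !mem_undup; apply: Hs.
Qed.

Lemma tcard_cons z (s : tset) : tcard (z :: s) <= (tcard s).+1.
Proof. by rewrite /tcard /=; case: ifP. Qed.

Lemma tcard_uniq (s : tset) : uniq s -> tcard s = size s.
Proof. by move=> u; rewrite /tcard undup_id. Qed.

Record InvR (b : bool) n0 n1 (t0 t1 : tset) (H0 H1 : history) : Prop := {
 i_u0 : uniq t0; i_u1 : uniq t1;
 i_card : n0 + 2 * size t0 + 1 = n1 + 2 * size t1 + 2 * b;
 i_h : hcard H0 + size t0 = hcard H1 + size t1 + b;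
 i_ev0 : ~~ odd n0; i_d0 : forall t, (t \in hdom H0) = (~~ odd t) && (t <= n0);
 i_od1 : odd n1; i_d1 : forall t, (t \in hdom H1) = odd t && (t <= n1);
 i_dis01 : forall z, z \in t0 -> z \notin t1;
 i_dis0s : forall z, z \in t0 -> z \notin spent H0 ++ spent H1;
 i_dis1s : forall z, z \in t1 -> z \notin spent H0 ++ spent H1;
 i_mem : forall t iota z, (t, (iota, z)) \in H0 ++ H1 -> z \in iota;
 i_sub : forall t iota z, (t, (iota, z)) \in H0 ++ H1 ->
           {subset iota <= t0 ++ t1 ++ spent H0 ++ spent H1};
 i_5a : forall t iota z, (t, (iota, z)) \in H0 ->
         t + 2 * tcard (tinter iota t0) < n1 + 2 * tcard (tinter iota t1) + 2;
 i_5b : forall t iota z, (t, (iota, z)) \in H1 ->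
         t + 2 * tcard (tinter iota t1) < n0 + 2 * tcard (tinter iota t0) + 2
}.

Arguments i_sub {b n0 n1 t0 t1 H0 H1}.

Definition Inv (s : state) : Prop :=
  let: State b n0 n1 t0 t1 H0 H1 := s in InvR b n0 n1 t0 t1 H0 H1.

Lemma inv_init : Inv init_state.
Proof.
split=> //=.
- by move=> t; rewrite inE; case: t => [|[|t]] //=; rewrite andbF.
- by move=> t; rewrite inE; case: t => [|[|t]] //=; rewrite andbF.
- by move=> t iota z; rewrite !inE => /orP[] /eqP [_ -> ->].
- move=> t iota z; rewrite !inE => /orP[] /eqP [_ -> _] x; rewrite !inE => /eqP ->;
  by rewrite eqxx ?orbT.
- by move=> t iota z; rewrite inE => /eqP [-> -> _].
- by move=> t iota z; rewrite inE => /eqP [-> -> _].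
Qed.

Lemma tinter_fresh (iota t : tset) z : z \notin iota -> tinter iota (z :: t) = tinter iota t.
Proof.
move=> Hz; apply: eq_in_filter => x hx; rewrite inE.
by have -> : (x == z) = false by apply/eqP => e; rewrite -e hx in Hz.
Qed.

Lemma fresh_iota b n0 n1 t0 t1 H0 H1 z : InvR b n0 n1 t0 t1 H0 H1 ->
  z \notin t0 -> z \notin t1 -> z \notin spent H0 -> z \notin spent H1 ->
  forall t iota z', (t, (iota, z')) \in H0 ++ H1 -> z \notin iota.
Proof.
move=> I h0 h1 h2 h3 t iota z' he; apply/negP => /(i_sub I _ _ _ he).
by rewrite !mem_cat (negbTE h0) (negbTE h1) (negbTE h2) (negbTE h3).
Qed.

Arguments fresh_iota {b n0 n1 t0 t1 H0 H1 z}.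

Lemma inv_flip0 n0 n1 t0 t1 H0 H1 z : InvR false n0 n1 t0 t1 H0 H1 ->
  z \notin t0 -> z \notin t1 -> z \notin spent H0 -> z \notin spent H1 ->
  InvR true n0 n1 (z :: t0) t1 H0 H1.
Proof.
move=> I h0 h1 h2 h3; have F := fresh_iota I h0 h1 h2 h3.
case: I => u0 u1 c h e0 d0 o1 d1 D01 D0s D1s M S A B.
split=> //=.
- by rewrite h0.
- lia.
- lia.
- by move=> x; rewrite inE => /orP[/eqP ->|/D01].
- by move=> x; rewrite inE => /orP[/eqP ->|/D0s] //; rewrite mem_cat negb_or h2.
- by move=> t iota z' he x /(S _ _ _ he) hx; rewrite /= inE hx orbT.
- move=> t iota z' he; rewrite tinter_fresh; first exact: A he.
  by apply: (F t iota z'); rewrite mem_cat he.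
- move=> t iota z' he; rewrite tinter_fresh; first exact: B he.
  by apply: (F t iota z'); rewrite mem_cat he orbT.
Qed.

Lemma inv_flip1 n0 n1 t0 t1 H0 H1 z : InvR true n0 n1 t0 t1 H0 H1 ->
  z \notin t0 -> z \notin t1 -> z \notin spent H0 -> z \notin spent H1 ->
  InvR false n0 n1 t0 (z :: t1) H0 H1.
Proof.
move=> I h0 h1 h2 h3; have F := fresh_iota I h0 h1 h2 h3.
case: I => u0 u1 c h e0 d0 o1 d1 D01 D0s D1s M S A B.
split=> //=.
- by rewrite h1.
- lia.
- lia.
- move=> x hx; rewrite inE negb_or D01 // andbT; apply/eqP => e; by rewrite -e hx in h0.
- by move=> x; rewrite inE => /orP[/eqP ->|/D1s] //; rewrite mem_cat negb_or h2.
- move=> t iota z' he x /(S _ _ _ he); rewrite !mem_cat !inE => /or4P[] hx; by rewrite ?mem_cat hx ?orbT.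
- move=> t iota z' he; rewrite tinter_fresh; first exact: A he.
  by apply: (F t iota z'); rewrite mem_cat he.
- move=> t iota z' he; rewrite tinter_fresh; first exact: B he.
  by apply: (F t iota z'); rewrite mem_cat he orbT.
Qed.

Lemma tinter_mono (iota s s' : tset) : {subset s <= s'} ->
  tcard (tinter iota s) <= tcard (tinter iota s').
Proof.
move=> H; apply: tcard_sub => x; rewrite !mem_filter => /andP[/H -> ->]; done.
Qed.

Lemma tinter_rem (iota s : tset) z :
  tcard (tinter iota s) <= (tcard (tinter iota [seq x <- s | x != z])).+1.
Proof.
apply: leq_trans (tcard_cons z _); apply: tcard_sub => x.
rewrite inE !mem_filter; case: eqP => //= _ /andP[-> ->]; done.
Qed.

Lemma inv_inc0 b n0 n1 t0 t1 H0 H1 z : InvR b n0 n1 t0 t1 H0 H1 -> z \in t0 ->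
  InvR b n0.+2 n1 [seq x <- t0 | x != z] t1 (hadd n0.+2 (t0 ++ t1, z) H0) H1.
Proof.
move=> I hz.
case: I => u0 u1 c h e0 d0 o1 d1 D01 D0s D1s M S A B.
have fr : n0.+2 \notin hdom H0 by rewrite d0 (_ : n0.+2 <= n0 = false) ?andbF //; apply/negbTE; rewrite -ltnNge.
rewrite hadd_fresh //.
have sz : size [seq x <- t0 | x != z] = (size t0).-1 by rewrite -rem_filter // size_rem.
have pos : 0 < size t0 by case: (t0) hz.
have sub : forall x, x \in t0 ++ t1 ++ spent H0 ++ spent H1 ->
   x \in [seq x <- t0 | x != z] ++ t1 ++ spent ((n0.+2, (t0 ++ t1, z)) :: H0) ++ spent H1.
  move=> x; rewrite /= !mem_cat inE mem_filter.
  case: eqVneq => [->|_] /=; first by rewrite !orbT.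
  by case/or4P=> hx; rewrite ?mem_cat hx ?orbT.
split.
- exact: filter_uniq.
- done.
- rewrite sz; lia.
- rewrite hcard_cons // sz; lia.
- by rewrite /= negbK.
- move=> t; rewrite /= inE d0.
  case: eqVneq => [->|ne] /=; first by rewrite negbK e0 leqnn.
  have [le|gt] := leqP t n0; first by rewrite (leq_trans le (leqW (leqnSn n0))).
  rewrite ?andbF; have [le2|] := leqP t n0.+2; last by rewrite andbF.
  have -> : t = n0.+1 by move/eqP: ne => ne; lia.
  by rewrite /= e0.
- done.
- done.
- by move=> x; rewrite mem_filter => /andP[_ /D01].
- move=> x; rewrite mem_filter => /andP[xz /D0s]; rewrite /= !mem_cat inE (negbTE xz).
  by rewrite mem_cat.
- move=> x hx; rewrite /= inE negb_or (D1s _ hx) andbT.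
  by apply/eqP => e; move: (D01 _ hz); rewrite -e hx.
- move=> t iota z'; rewrite /= inE => /orP[/eqP [_ -> ->]|he]; first by rewrite mem_cat hz.
  exact: M he.
- move=> t iota z'; rewrite /= inE => /orP[/eqP [_ -> _]|he] x.
    move=> hx; apply: sub; rewrite !mem_cat; rewrite mem_cat in hx.
    by case/orP: hx => ->; rewrite ?orbT.
  by move/(S t iota z' he)/sub.
- move=> t iota z'; rewrite inE => /orP[/eqP [-> -> _]|he].
    have l1 : tcard (tinter (t0 ++ t1) [seq x <- t0 | x != z]) <= size t0 - 1.
      rewrite subn1 -sz -tcard_uniq; last exact: filter_uniq.
      by apply: tcard_sub => x; rewrite /tinter (mem_filter _ x (t0 ++ t1)) => /andP[].
    have l2 : size t1 <= tcard (tinter (t0 ++ t1) t1).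
      rewrite -tcard_uniq //; apply: tcard_sub => x hx; rewrite mem_filter hx mem_cat hx orbT.
      done.
    case: b c h => /= c h; move: l1 l2 pos c; move: (tcard _) (tcard _) => X Y; lia.
  have ss : {subset [seq x <- t0 | x != z] <= t0} by move=> x; rewrite mem_filter => /andP[].
  have := A t iota z' he; have := @tinter_mono iota _ _ ss.
  move: (tcard _) (tcard _) (tcard _) => X Y W; lia.
- move=> t iota z' he; have := B t iota z' he; have := tinter_rem iota t0 z.
  move: (tcard _) (tcard _) (tcard _) => X Y W; lia.
Qed.

Lemma inv_inc1 b n0 n1 t0 t1 H0 H1 z : InvR b n0 n1 t0 t1 H0 H1 -> z \in t1 ->
  InvR b n0 n1.+2 t0 [seq x <- t1 | x != z] H0 (hadd n1.+2 (t0 ++ t1, z) H1).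
Proof.
move=> I hz.
case: I => u0 u1 c h e0 d0 o1 d1 D01 D0s D1s M S A B.
have fr : n1.+2 \notin hdom H1 by rewrite d1 (_ : n1.+2 <= n1 = false) ?andbF //; apply/negbTE; rewrite -ltnNge.
rewrite hadd_fresh //.
have sz : size [seq x <- t1 | x != z] = (size t1).-1 by rewrite -rem_filter // size_rem.
have pos : 0 < size t1 by case: (t1) hz.
have zt0 : z \notin t0 by apply/negP => /D01; rewrite hz.
have sub : forall x, x \in t0 ++ t1 ++ spent H0 ++ spent H1 ->
   x \in t0 ++ [seq x <- t1 | x != z] ++ spent H0 ++ spent ((n1.+2, (t0 ++ t1, z)) :: H1).
  move=> x; rewrite /= !mem_cat inE mem_filter.
  case: eqVneq => [->|_] /=; first by rewrite !orbT.
  by case/or4P=> hx; rewrite ?mem_cat hx ?orbT.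
have ss : {subset [seq x <- t1 | x != z] <= t1} by move=> x; rewrite mem_filter => /andP[].
split.
- done.
- exact: filter_uniq.
- rewrite sz; lia.
- rewrite hcard_cons // sz; lia.
- done.
- done.
- by rewrite /= negbK.
- move=> t; rewrite /= inE d1.
  case: eqVneq => [->|ne] /=; first by rewrite o1 leqnn.
  have [le|gt] := leqP t n1; first by rewrite (leq_trans le (leqW (leqnSn n1))).
  rewrite ?andbF; have [le2|] := leqP t n1.+2; last by rewrite andbF.
  have -> : t = n1.+1 by move/eqP: ne => ne; lia.
  by rewrite /= o1.
- by move=> x /D01 hx; apply/negP => /ss; apply/negP.
- move=> x hx; rewrite /= mem_cat inE !negb_or.
  move: (D0s _ hx); rewrite mem_cat negb_or => /andP[-> ->]; rewrite andbT /=.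
  by apply/eqP => e; move: zt0; rewrite -e hx.
- move=> x; rewrite mem_filter => /andP[xz /D1s]; rewrite /= !mem_cat inE (negbTE xz).
  by case: (x \in spent H0); case: (x \in spent H1).
- move=> t iota z'; rewrite /= mem_cat inE => /or3P[he|/eqP [_ -> ->]|he].
  + by apply: (M t); rewrite mem_cat he.
  + by rewrite mem_cat hz orbT.
  + by apply: (M t); rewrite mem_cat he orbT.
- move=> t iota z'; rewrite /= mem_cat inE => /or3P[he|/eqP [_ -> _]|he] x.
  + by move/(S t iota z'); rewrite mem_cat he => /(_ isT)/sub.
  + move=> hx; apply: sub; rewrite !mem_cat; rewrite mem_cat in hx.
    by case/orP: hx => ->; rewrite ?orbT.
  + by move/(S t iota z'); rewrite mem_cat he orbT => /(_ isT)/sub.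
- move=> t iota z' he; have := A t iota z' he; have := tinter_rem iota t1 z.
  move: (tcard _) (tcard _) (tcard _) => X Y W; lia.
- move=> t iota z'; rewrite inE => /orP[/eqP [-> -> _]|he].
    have l1 : tcard (tinter (t0 ++ t1) [seq x <- t1 | x != z]) <= size t1 - 1.
      rewrite subn1 -sz -tcard_uniq; last exact: filter_uniq.
      by apply: tcard_sub => x; rewrite /tinter (mem_filter _ x (t0 ++ t1)) => /andP[].
    have l2 : size t0 <= tcard (tinter (t0 ++ t1) t0).
      rewrite -tcard_uniq //; apply: tcard_sub => x hx; rewrite mem_filter hx mem_cat hx.
      done.
    case: b c h => /= c h; move: l1 l2 pos c; move: (tcard _) (tcard _) => X Y; lia.
  have := B t iota z' he; have := @tinter_mono iota _ _ ss.
  move: (tcard _) (tcard _) (tcard _) => X Y W; lia.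
Qed.

Lemma inv_step s s' : Inv s -> step s s' -> Inv s'.
Proof.
move=> I st; case: st I => /=.
- move=> b n0 n1 t0 t1 H0 H1 z h0 h1 h2 h3; case: b => I /=.
    exact: inv_flip1.
  exact: inv_flip0.
- by move=> *; apply: inv_inc0.
- by move=> *; apply: inv_inc1.
Qed.

Lemma inv_reach s : reachable s -> Inv s.
Proof.
elim=> [|s1 s2 _ I st]; first exact: inv_init.
exact: inv_step I st.
Qed.

Theorem mainTheorem4 (s : state) :
  reachable s ->
  let b := st_b s in
  let n0 := st_n0 s in let n1 := st_n1 s in
  let t0 := st_tau0 s in let t1 := st_tau1 s in
  let H0 := st_H0 s in let H1 := st_H1 s in
  (* (1) *)
  [/\ hcard H0 + tcard t0 = hcard H1 + tcard t1 + b,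
  (* (2) *)
      (~~ odd n0 /\ forall t, (t \in hdom H0) = (~~ odd t) && (t <= n0)) /\
      (odd n1 /\ forall t, (t \in hdom H1) = odd t && (t <= n1)),
  (* (3) *)
      [/\ forall z, z \in t0 -> z \notin t1,
          forall z, z \in t0 -> z \notin spent H0 ++ spent H1
        & forall z, z \in t1 -> z \notin spent H0 ++ spent H1],
  (* (4) *)
      forall t iota z, (t, (iota, z)) \in H0 ++ H1 -> z \in iota
  & (* (5) *)
      (forall t iota z, (t, (iota, z)) \in H0 ->
         t + 2 * tcard (tinter iota t0) < n1 + 2 * tcard (tinter iota t1) + 2) /\
      (forall t iota z, (t, (iota, z)) \in H1 ->
         t + 2 * tcard (tinter iota t1) < n0 + 2 * tcard (tinter iota t0) + 2)].
Proof.
move/inv_reach; case: s => b n0 n1 t0 t1 H0 H1 /=.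
case=> u0 u1 c h e0 d0 o1 d1 D01 D0s D1s M S A B.
split=> //.
by rewrite !tcard_uniq.
Qed.
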